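(* If $\lambda_1<a$, $1<q<p$ and $b>0$, then for any fixed $\Lambda>0$ there exists $t_0=t_0(\Lambda)>0$ such that $I^+_{\lambda,s}(t\varphi_1)<0$ for all $t\ge t_0$ and all $0<\lambda<\Lambda$.
   Context: $\Omega\subset\mathbb{R}^N$ bounded smooth domain, $s\in(0,1)$, $p>1$, $N>sp$, $p_s^*=\frac{Np}{N-sp}$. $X_p^s=\{u\in W^{s,p}(\mathbb{R}^N): u=0 \text{ a.e. in } \mathbb{R}^N\setminus\Omega\}$ with norm $\|u\|_{X_p^s}=\big(\int_{\mathbb{R}^{2N}}\frac{|u(x)-u(y)|^p}{|x-y|^{N+sp}}dxdy\big)^{1/p}$. $\lambda_1=\inf\{\|u\|_{X_p^s}^p:u\in X_p^s,\|u\|_{L^p(\Omega)}=1\}$ is the first eigenvalue of the fractional $p$-Laplacian $(-\Delta)^s_p$ on $X_p^s$, and $\varphi_1$ the associated positive, $L^p$-normalized eigenfunction. $I^+_{\lambda,s}(u)=\frac1p\|u\|_{X_p^s}^p+\frac\lambda q\int_\Omega|u^+|^q-\frac ap\int_\Omega|u^+|^p-\frac{b}{p_s^*}\int_\Omega(u^+)^{p_s^*}$, $u^+=\max\{u,0\}$. *)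

(* Defs.v *)
From HB Require Import structures.
From mathcomp Require Import all_boot all_order all_algebra.
From mathcomp Require Import all_classical all_reals all_analysis.
Import Order.TTheory GRing.Theory Num.Theory.
Import numFieldNormedType.Exports.
Local Open Scope classical_set_scope.
Local Open Scope ring_scope.

(** R^(n+1) is built as the iterated product (..((R * R) * R) ..) * R of the
    Lebesgue measure spaces, with the (completed-free) product measure
    [m \x lebesgue_measure] of mathcomp-analysis.  [toRow] identifies a
    point with the row vector of its coordinates, which carries the usual
    topology / normed structure (used for the domain conditions). *)

Record mspace (R : realType) := MSpace {
  ms_disp : measure_display;
  ms_type : measurableType ms_disp;
  ms_meas : {measure set ms_type -> \bar R}
}.

Fixpoint Rspace (R : realType) (n : nat) : mspace R :=
  match n with
  | 0 => @MSpace R _ _ (@lebesgue_measure R)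
  | n'.+1 => @MSpace R _ _ ((@ms_meas R (Rspace R n')) \x (@lebesgue_measure R))%E
  end.

Fixpoint toRow (R : realType) (n : nat) : @ms_type R (Rspace R n) -> 'rV[R]_n.+1 :=
  match n return @ms_type R (Rspace R n) -> 'rV[R]_n.+1 with
  | 0 => fun x => \row_(i < 1) (x : R)
  | n'.+1 => fun x => row_mx (\row_(i < 1) (x.2 : R)) (@toRow R n' x.1)
  end.

(** R^N (meaningful for N >= 1), its Lebesgue measure, coordinates. *)
Definition RN (R : realType) (N : nat) : measurableType _ := @ms_type R (Rspace R N.-1).
Definition lebN (R : realType) (N : nat) : {measure set RN R N -> \bar R} :=
  @ms_meas R (Rspace R N.-1).
Definition coord (R : realType) (N : nat) (x : RN R N) : 'rV[R]_(N.-1).+1 :=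
  @toRow R N.-1 x.
Arguments coord {R N}.

Definition edist (R : realType) (N : nat) (x y : RN R N) : R :=
  Num.sqrt (\sum_(i < (N.-1).+1) ((coord x - coord y) 0 i) ^+ 2).
Arguments edist {R N}.

Fixpoint iterD (R : realType) (n : nat) (vs : seq 'rV[R]_n) (f : 'rV[R]_n -> R)
  : 'rV[R]_n -> R :=
  match vs with
  | [::] => f
  | v :: vs' => fun x => 'D_v (@iterD R n vs' f) x
  end.
Arguments iterD {R n}.

Definition smooth (R : realType) (n : nat) (f : 'rV[R]_n -> R) : Prop :=
  forall vs : seq 'rV[R]_n,
    continuous (iterD vs f) /\ (forall x v, derivable (iterD vs f) x v).
Arguments smooth {R n}.

Definition smooth_boundary (R : realType) (n : nat) (U : set 'rV[R]_n) : Prop :=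
  forall z, closure U z -> ~ U z ->
    exists r : R, 0 < r /\ exists rho : 'rV[R]_n -> R,
      smooth rho /\
      (forall y, ball z r y -> exists v, 'D_v rho y != 0) /\
      (forall y, ball z r y -> (U y <-> rho y < 0)).
Arguments smooth_boundary {R n}.

Definition bounded_smooth_domain (R : realType) (N : nat) (Om : set (RN R N)) : Prop :=
  let U := (@coord R N) @` Om in
  Om !=set0 /\ open U /\ connected U /\
  (exists M : R, forall x, Om x -> `|coord x| <= M) /\
  smooth_boundary U.
Arguments bounded_smooth_domain {R} N.

Definition gagliardo (R : realType) (N : nat) (s p : R) (u : RN R N -> R) : \bar R :=
  (\int[lebN R N]_x \int[lebN R N]_y
     ((`|u x - u y| `^ p) / (edist x y `^ (N%:R + s * p)))%:E)%E.
Arguments gagliardo {R} N.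

Definition in_Xps (R : realType) (N : nat) (s p : R) (Om : set (RN R N))
  (u : RN R N -> R) : Prop :=
  measurable_fun setT u /\
  {ae lebN R N, forall x, ~ Om x -> u x = 0} /\
  (\int[lebN R N]_x (`|u x| `^ p)%:E < +oo)%E /\
  (gagliardo N s p u < +oo)%E.
Arguments in_Xps {R} N.

Definition normX (R : realType) (N : nat) (s p : R) (u : RN R N -> R) : R :=
  fine (gagliardo N s p u) `^ p^-1.
Arguments normX {R} N.

Definition LpOm (R : realType) (N : nat) (p : R) (Om : set (RN R N))
  (u : RN R N -> R) : R :=
  fine (\int[lebN R N]_(x in Om) (`|u x| `^ p)%:E)%E `^ p^-1.
Arguments LpOm {R} N.

Definition lambda1 (R : realType) (N : nat) (s p : R) (Om : set (RN R N)) : R :=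
  inf [set normX N s p u `^ p |
        u in [set u | in_Xps N s p Om u /\ LpOm N p Om u = 1]].
Arguments lambda1 {R} N.

(** weak eigenfunction of (-Delta)^s_p on X_p^s with eigenvalue lam *)
Definition is_eigenfunction (R : realType) (N : nat) (s p : R) (Om : set (RN R N))
  (lam : R) (phi : RN R N -> R) : Prop :=
  in_Xps N s p Om phi /\
  forall v, in_Xps N s p Om v ->
    Rintegral (lebN R N) setT (fun x => Rintegral (lebN R N) setT (fun y =>
       `|phi x - phi y| `^ (p - 2) * (phi x - phi y) * (v x - v y)
         / edist x y `^ (N%:R + s * p)))
    = lam * Rintegral (lebN R N) Om (fun x => `|phi x| `^ (p - 2) * phi x * v x).
Arguments is_eigenfunction {R} N.

Definition first_eigenfunction (R : realType) (N : nat) (s p : R)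
  (Om : set (RN R N)) (phi : RN R N -> R) : Prop :=
  is_eigenfunction N s p Om (lambda1 N s p Om) phi /\
  {ae lebN R N, forall x, Om x -> 0 < phi x} /\
  LpOm N p Om phi = 1.
Arguments first_eigenfunction {R} N.

Definition pstar (R : realType) (N : nat) (s p : R) : R := N%:R * p / (N%:R - s * p).
Arguments pstar {R} N.

Definition Iplus (R : realType) (N : nat) (s p q a b lam : R) (Om : set (RN R N))
  (u : RN R N -> R) : \bar R :=
  ((p^-1 * normX N s p u `^ p)%:E
   + (lam / q)%:E * \int[lebN R N]_(x in Om) (`|Num.max (u x) 0| `^ q)%:E
   - (a / p)%:E * \int[lebN R N]_(x in Om) (`|Num.max (u x) 0| `^ p)%:E
   - (b / pstar N s p)%:E
       * \int[lebN R N]_(x in Om) (Num.max (u x) 0 `^ pstar N s p)%:E)%E.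

Arguments Iplus {R} N.

(* Main.v *)
Require Import Defs.
From HB Require Import structures.
From mathcomp Require Import all_boot all_order all_algebra.
From mathcomp Require Import all_classical all_reals all_analysis.
From mathcomp Require Import measurable_realfun.
From mathcomp Require Import lra.
Import Order.TTheory GRing.Theory Num.Theory.
Import numFieldNormedType.Exports.
Local Open Scope classical_set_scope.
Local Open Scope ring_scope.
Import HBNNSimple.
Lemma entry_le_norm (R : realType) n (A : 'rV[R]_n) i : `|A 0 i| <= `|A|.
Proof.
have -> : `|A| = mx_norm A by [].
rewrite mx_normrE.
exact: (le_bigmax _ (fun ij => `|A ij.1 ij.2|) (0, i)).
Qed.
Fixpoint box (R : realType) (M : R) (n : nat) : set (@ms_type R (Rspace R n)) :=
  match n return set (@ms_type R (Rspace R n)) with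
  | 0 => `[-M, M]%classic
  | n'.+1 => (box R M n') `*` `[-M, M]%classic
  end.
Arguments box {R} M n.

Lemma box_meas (R : realType) (M : R) n : measurable (box M n).
Proof.
elim: n => [|n IH] /=; first exact: measurable_itv.
apply: measurableX => //; exact: measurable_itv.
Qed.

Lemma box_fin (R : realType) (M : R) n : (@ms_meas R (Rspace R n) (box M n) < +oo)%E.
Proof.
have itvfin : (lebesgue_measure (box M 0) < +oo)%E.
  by rewrite lebesgue_measure_itv /=; case: ifP => _; rewrite ltry.
elim: n => [|n IH] //=.
rewrite product_measure1E; [|exact: box_meas|exact: measurable_itv].
apply: lte_mul_pinfty => //.
by rewrite ge0_fin_numE...
Qed.

Lemma box_sub (R : realType) (M : R) n (x : @ms_type R (Rspace R n)) :
  (forall i, `|@toRow R n x 0 i| <= M) -> box M n x.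
Proof.
elim: n x => [|n IH] x H /=.
  have := H ord0; rewrite /= mxE => /=.
  by rewrite in_itv /= ler_norml.
case: x H => x1 x2 H; split => /=.
  apply: IH => i; have := H (@rshift 1 n.+1 i).
  by rewrite /= (@row_mxEr _ 1 1 n.+1).
have := H (@lshift 1 n.+1 ord0); rewrite /= (@row_mxEl _ 1 1 n.+1) mxE.
by rewrite in_itv /= ler_norml.
Qed.
Lemma int_scale_le d (T : measurableType d) (R : realType)
  (mu : {measure set T -> \bar R}) (D : set T) (f : T -> \bar R) (c : R) :
  0 < c -> (forall x, (0 <= f x)%E) ->
  (\int[mu]_(x in D) (c%:E * f x) <= c%:E * \int[mu]_(x in D) f x)%E.
Proof.
move=> c0 f0.
rewrite !ge0_integralE //; last by move=> x _; rewrite mule_ge0 // lee_fin ltW.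
apply: ge_ereal_sup => _ [h /= hle <-].
have ci0 : 0 <= c^-1 by rewrite invr_ge0 ltW.
pose h' := scale_nnsfun h ci0.
have -> : sintegral mu h = sintegral mu (cst c \* h')%R.
  apply: eq_sintegral => x /=; rewrite mulrA divff ?mul1r //.
by move: c0; rewrite lt0r => /andP[].
have E := sintegralrM mu c h'.
rewrite E; rewrite lee_pmul2l ?lte_fin //.
apply: ereal_sup_ubound; exists h' => //= x.
have := hle x; rewrite !patchE; case: ifP => _.
  move=> H; rewrite /= EFinM.
  rewrite -(@lee_pmul2l _ c%:E) ?lte_fin // muleA -EFinM divff ?mul1r //.
  by move: c0; rewrite lt0r => /andP[].
move=> H /=.
have hx0 : (h x)%:E = 0%E.
  by apply/eqP; rewrite eq_le H lee_fin //=.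
by rewrite EFinM hx0 mule0 (le_trans _ H) // -hx0.
Qed.
Lemma final_ineq (R : realType) (p ps K C : R) :
  0 < p -> p < ps -> 0 <= K -> 0 < C ->
  exists t0, 1 <= t0 /\ forall t, t0 <= t -> K * t `^ p < C * t `^ ps.
Proof.
move=> p0 pps K0 C0.
set e := ps - p.
have e0 : 0 < e by rewrite subr_gt0.
exists (Num.max 1 (((K + 1) / C) `^ e^-1)); split; first by rewrite le_max lexx.
move=> t; rewrite ge_max => /andP[t1 tK].
have t0 : 0 < t by apply: lt_le_trans t1.
have -> : ps = p + e by rewrite /e addrC subrK.
rewrite powRD; last by apply/implyP => _; rewrite gt_eqF.
have tp0 : 0 < t `^ p by apply: powR_gt0.
have KC : 0 <= (K + 1) / C by rewrite divr_ge0 ?ltW //; lra.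
have : ((K + 1) / C) `^ e^-1 `^ e <= t `^ e.
  apply: ge0_ler_powR => //; first exact: ltW.
  - by rewrite nnegrE powR_ge0.
  - by rewrite nnegrE ltW.
rewrite -powRrM mulVf ?gt_eqF // powRr1 // => H.
have H2 : K + 1 <= C * t `^ e by rewrite -ler_pdivrMl // mulrC.
rewrite mulrCA [ltRHS]mulrC ltr_pM2r //.
lra.
Qed.
Lemma mpow_abs d (T : measurableType d) (R : realType) (f : T -> R) r :
  measurable_fun setT f ->
  measurable_fun setT (fun x => (`|Num.max (f x) 0| `^ r)%:E).
Proof.
move=> mf; apply/measurable_EFinP.
apply: (measurableT_comp (measurable_powR r)).
apply: measurableT_comp; first exact: normr_measurable.
by apply: measurable_maxr => //; exact: measurable_cst.
Qed.

Lemma mpow_noabs d (T : measurableType d) (R : realType) (f : T -> R) r :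
  measurable_fun setT f ->
  measurable_fun setT (fun x => (Num.max (f x) 0 `^ r)%:E).
Proof.
move=> mf; apply/measurable_EFinP.
apply: (measurableT_comp (measurable_powR r)).
by apply: measurable_maxr => //; exact: measurable_cst.
Qed.

Lemma mpow_norm d (T : measurableType d) (R : realType) (f : T -> R) r :
  measurable_fun setT f ->
  measurable_fun setT (fun x => (`|f x| `^ r)%:E).
Proof.
move=> mf; apply/measurable_EFinP.
apply: (measurableT_comp (measurable_powR r)).
by apply: measurableT_comp; first exact: normr_measurable.
Qed.

Lemma ereal_eq1 (R : realType) (p : R) (e : \bar R) : 0 < p -> (0 <= e)%E ->
  fine e `^ p^-1 = 1 -> e = 1%:E.
Proof.
move=> p0; case: e => [x| |] //= x0 H.
- have x0' : 0 <= x by rewrite -lee_fin.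
  have : (x `^ p^-1) `^ p = 1 `^ p by rewrite H.
  by rewrite -powRrM mulVf ?gt_eqF // powRr1 // powR1 => ->.
- by move: H; rewrite powR0 ?invr_eq0 ?gt_eqF // => /eqP; rewrite eq_sym oner_eq0.
Qed.

Lemma int_scale d (T : measurableType d) (R : realType)
  (mu : {measure set T -> \bar R}) (D : set T) (f : T -> \bar R) (c : R) :
  0 < c -> (forall x, (0 <= f x)%E) ->
  (\int[mu]_(x in D) (c%:E * f x) = c%:E * \int[mu]_(x in D) f x)%E.
Proof.
move=> c0 f0; apply/le_anti/andP; split; first exact: int_scale_le.
have ci0 : 0 < c^-1 by rewrite invr_gt0.
have := @int_scale_le d T R mu D (fun x => c%:E * f x)%E c^-1 ci0
  (fun x => mule_ge0 (ltW c0 : (0 <= c%:E)%E) (f0 x)).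
under eq_integral do rewrite muleA -EFinM mulVf ?mul1e ?gt_eqF //.
move=> H; rewrite -(@lee_pmul2l _ c^-1%:E) ?lte_fin // muleA -EFinM mulVf ?gt_eqF // mul1e //.
Qed.

Lemma gag_scale (R : realType) N (s p : R) (u : RN R N -> R) (t : R) : 0 < t ->
  gagliardo N s p (fun x => t * u x) = ((t `^ p)%:E * gagliardo N s p u)%E.
Proof.
move=> t0; rewrite /gagliardo -int_scale ?powR_gt0 //; last first.
  by move=> x; apply: integral_ge0 => y _; rewrite lee_fin divr_ge0 ?powR_ge0.
apply: eq_integral => x _; rewrite -int_scale ?powR_gt0 //; last first.
  by move=> y; rewrite lee_fin divr_ge0 ?powR_ge0.
apply: eq_integral => y _; rewrite -EFinM; congr EFin.
rewrite -mulrBr normrM (gtr0_norm t0) (powRM _ (ltW t0) (normr_ge0 _)).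
by rewrite mulrA.
Qed.

Lemma max_scale (R : realType) (t y : R) : 0 < t ->
  Num.max (t * y) 0 = t * Num.max y 0.
Proof. by move=> t0; rewrite maxr_pMr ?mulr0 // ltW. Qed.

Lemma maxabs (R : realType) (y : R) : `|Num.max y 0| <= `|y|.
Proof.
rewrite /Order.max; case: ifPn => [y0|]; first by rewrite normr0.
by [].
Qed.

Lemma pow_bound (R : realType) (u v q p : R) : 0 <= u -> u <= v -> 0 < q -> q <= p ->
  u `^ q <= 1 + v `^ p.
Proof.
move=> u0 uv q0 qp.
have vp0 : 0 <= v `^ p by apply: powR_ge0.
have [u1|u1] := leP u 1.
  have : u `^ q <= 1 `^ q by apply: ge0_ler_powR => //; rewrite ?nnegrE ?ltW.
  rewrite powR1 => H; lra.
have H1 : u `^ q <= u `^ p by apply: ler_powR => //; exact: ltW.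
have H2 : u `^ p <= v `^ p.
  apply: ge0_ler_powR => //; rewrite ?nnegrE ?ltW //; first exact: (lt_le_trans q0).
  by apply: lt_le_trans uv; apply: lt_trans u1.
lra.
Qed.

Lemma ereal_cases (R : realType) (e : \bar R) : (0 <= e)%E -> e != 0%E ->
  (exists r, e = r%:E /\ 0 < r) \/ e = +oo%E.
Proof.
case: e => [r| |] //= r0 rn0; last by right.
left; exists r; split => //; rewrite lt_neqAle eq_sym -lee_fin r0 andbT.
by apply: contra rn0 => /eqP ->.
Qed.

Theorem lemma4p5 (R : realType) (N : nat) (s p q a b : R)
  (Om : set (RN R N)) (phi1 : RN R N -> R) :
  (0 < N)%N -> 0 < s < 1 -> 1 < p -> s * p < N%:R ->
  bounded_smooth_domain N Om -> measurable Om ->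
  first_eigenfunction N s p Om phi1 ->
  lambda1 N s p Om < a -> 1 < q -> q < p -> 0 < b ->
  forall Lam : R, 0 < Lam ->
    exists t0 : R, 0 < t0 /\
      forall t lam : R, t0 <= t -> 0 < lam < Lam ->
        (Iplus N s p q a b lam Om (fun x => (t * phi1 x)%R) < 0)%E.
Proof.
move=> N0 /andP[s0 s1] p1 spN Hbd mOm [[Xphi _] [phipos Lp1]] la1 q1 qp b0 Lam Lam0.
case: Xphi => mphi [_ [_ gfin]].
case: Hbd => _ [_ [_ [[M HM] _]]].
have p0 : 0 < p by apply: lt_trans p1.
have q0 : 0 < q by apply: lt_trans q1.
set mu := lebN R N.
set ps := pstar N s p.
have pps : p < ps.
  rewrite /ps /pstar.
  have Nsp : 0 < N%:R - s * p by rewrite subr_gt0.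
  rewrite ltr_pdivlMr //.
  have := mulr_gt0 (mulr_gt0 p0 s0) p0; nra.
have ps0 : 0 < ps by apply: lt_trans pps.
have muOm : (mu Om < +oo)%E.
  rewrite /mu /lebN.
  apply: (@le_lt_trans _ _ (@ms_meas R (Rspace R N.-1) (box M N.-1))); last exact: box_fin.
  apply: le_measure; rewrite ?inE //; first exact: box_meas.
  move=> x Omx; apply: box_sub => i.
  exact: (le_trans (@entry_le_norm R _ (Defs.coord x) i) (HM x Omx)).
have X1 : (\int[mu]_(x in Om) (`|phi1 x| `^ p)%:E = 1%:E)%E.
  apply: (@ereal_eq1 R p _ p0); last exact: Lp1.
  by apply: integral_ge0 => x _; rewrite lee_fin powR_ge0.
have mA r : measurable_fun Om (fun x => (`|Num.max (phi1 x) 0| `^ r)%:E).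
  by apply: measurable_funTS; apply: mpow_abs.
have mB r : measurable_fun Om (fun x => (Num.max (phi1 x) 0 `^ r)%:E).
  by apply: measurable_funTS; apply: mpow_noabs.
have mC r : measurable_fun Om (fun x => (`|phi1 x| `^ r)%:E).
  by apply: measurable_funTS; apply: mpow_norm.
set P := (\int[mu]_(x in Om) (`|Num.max (phi1 x) 0| `^ p)%:E)%E.
have P0 : (0 <= P)%E by apply: integral_ge0 => x _; rewrite lee_fin powR_ge0.
have P1 : (P <= 1%:E)%E.
  rewrite -X1; apply: ge0_le_integral => //.
  move=> x _; rewrite lee_fin; apply: ge0_ler_powR; rewrite ?nnegrE //; first exact: ltW.
  exact: maxabs.
have [Pr PE] : exists Pr, P = Pr%:E.
  exists (fine P); rewrite fineK // ge0_fin_numE //; exact: (le_lt_trans P1 (ltry _)).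
set Q := (\int[mu]_(x in Om) (`|Num.max (phi1 x) 0| `^ q)%:E)%E.
have Q0 : (0 <= Q)%E by apply: integral_ge0 => x _; rewrite lee_fin powR_ge0.
have Qfin : (Q < +oo)%E.
  have HQ : (Q <= \int[mu]_(x in Om) ((1 + `|phi1 x| `^ p)%:E))%E.
    apply: ge0_le_integral => //.
    - apply/measurable_EFinP; apply: measurable_funD; first exact: measurable_cst.
      by apply/measurable_EFinP; exact: mC.
    - move=> x _; rewrite lee_fin; apply: pow_bound => //; first exact: maxabs.
      exact: ltW.
  apply: (le_lt_trans HQ).
  under eq_integral do rewrite EFinD.
  rewrite ge0_integralD //.
  have -> : (\int[mu]_(x in Om) 1%E = mu Om)%E.
    by rewrite (integral_cst mu mOm 1) mul1e.
  by rewrite X1; apply: lte_add_pinfty => //; exact: ltry.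
have [Qr QE] : exists Qr, Q = Qr%:E.
  by exists (fine Q); rewrite fineK // ge0_fin_numE.
set S := (\int[mu]_(x in Om) (Num.max (phi1 x) 0 `^ ps)%:E)%E.
have S0 : (0 <= S)%E by apply: integral_ge0 => x _; rewrite lee_fin powR_ge0.
have Sn0 : S != 0%E.
  apply/negP => /eqP S00.
  have Hae : ae_eq mu Om (fun x => (Num.max (phi1 x) 0 `^ ps)%:E) (cst 0%E).
    apply/(ae_eq_integral_abs mu mOm (mB ps)).
    rewrite -S00; apply: eq_integral => x _; rewrite gee0_abs // lee_fin powR_ge0 //.
  have : (\int[mu]_(x in Om) (`|phi1 x| `^ p)%:E = \int[mu]_(x in Om) (cst 0%E x))%E.
    apply: ae_eq_integral => //.
    apply: filterS2 Hae phipos => x H1 H2 Omx.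
    have h2 := H2 Omx.
    have : Num.max (phi1 x) 0 `^ ps = 0 by have := H1 Omx; rewrite /= => -[].
    by rewrite max_l ?ltW // => /powR_eq0_eq0 h0; move: h2; rewrite h0 ltxx.
  by rewrite X1 integral0 => /eqP; rewrite eqe oner_eq0.
have G0 : (0 <= gagliardo N s p phi1)%E.
  apply: integral_ge0 => x _; apply: integral_ge0 => y _.
  by rewrite lee_fin divr_ge0 ?powR_ge0.
set G := fine (gagliardo N s p phi1).
have GE : gagliardo N s p phi1 = G%:E by rewrite fineK // ge0_fin_numE.
have G0' : 0 <= G by rewrite -lee_fin -GE.
have Iform : forall t lam, 0 < t ->
    Iplus N s p q a b lam Om (fun x => t * phi1 x) =
    ((p^-1 * (t `^ p * G))%:E + (lam / q)%:E * ((t `^ q)%:E * Qr%:E)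
     - (a / p)%:E * ((t `^ p)%:E * Pr%:E) - (b / ps)%:E * ((t `^ ps)%:E * S))%E.
  move=> t lam t0; rewrite /Iplus -QE -PE.
  have Hn : normX N s p (fun x => t * phi1 x) `^ p = t `^ p * G.
    rewrite /normX gag_scale // GE /= -powRrM mulVf ?gt_eqF // powRr1 //.
    by rewrite mulr_ge0 // powR_ge0.
  rewrite Hn; congr (_ + _ - _ - _)%E; congr (_ * _)%E.
  - rewrite -int_scale ?powR_gt0 //.
    apply: eq_integral => x _; rewrite -EFinM max_scale // normrM (gtr0_norm t0).
    by rewrite (powRM _ (ltW t0) (normr_ge0 _)).
  - rewrite -int_scale ?powR_gt0 //.
    apply: eq_integral => x _; rewrite -EFinM max_scale // normrM (gtr0_norm t0).
    by rewrite (powRM _ (ltW t0) (normr_ge0 _)).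
  - rewrite -int_scale ?powR_gt0 //; try by move=> x; rewrite lee_fin powR_ge0.
    apply: eq_integral => x _; rewrite -EFinM max_scale //.
    by rewrite (powRM _ (ltW t0)) // le_max lexx orbT.
have Qr0 : 0 <= Qr by rewrite -lee_fin -QE.
have Pr0 : 0 <= Pr by rewrite -lee_fin -PE.
clearbody S.
have [[Sr [SE Sr0]] | SE] := @ereal_cases R S S0 Sn0.
  set K := p^-1 * G + Lam / q * Qr + `|a| / p * Pr.
  set C := b / ps * Sr.
  have K0 : 0 <= K.
    rewrite /K; apply: addr_ge0; first apply: addr_ge0.
    - by rewrite mulr_ge0 // invr_ge0 ltW.
    - by rewrite mulr_ge0 // divr_ge0 // ltW.
    - by rewrite mulr_ge0 // divr_ge0 // ltW.
  have C0 : 0 < C by rewrite /C; apply: mulr_gt0 => //; apply: divr_gt0.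
  have [T0 [t01 Ht]] := @final_ineq R p ps K C p0 pps K0 C0.
  exists T0; split; first exact: lt_le_trans ltr01 t01.
  move=> t lam tt0 /andP[lam0 lamL].
  have t1 : 1 <= t by apply: le_trans tt0.
  have tpos : 0 < t by apply: lt_le_trans t1.
  rewrite Iform // SE -!EFinM -!EFinN -!EFinD lte_fin.
  have H := Ht t tt0.
  have tq : t `^ q <= t `^ p by apply: ler_powR => //; exact: ltW.
  have h1 : lam / q * (t `^ q * Qr) <= Lam / q * (t `^ p * Qr).
    apply: ler_pM.
    - by rewrite divr_ge0 ?ltW.
    - by rewrite mulr_ge0 ?powR_ge0.
    - by rewrite ler_pM2r ?invr_gt0 // ltW.
    - by rewrite ler_wpM2r.
  have h2 : - (a / p * (t `^ p * Pr)) <= `|a| / p * (t `^ p * Pr).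
    rewrite -mulNr ler_wpM2r ?mulr_ge0 ?powR_ge0 // -mulNr ler_pM2r ?invr_gt0 //.
    by rewrite ler_normr lexx orbT.
  rewrite /K /C in H.
  nra.
exists 1; split => // t lam t1 /andP[lam0 lamL].
have tpos : 0 < t by apply: lt_le_trans t1.
rewrite Iform // SE gt0_muley ?lte_fin ?powR_gt0 // gt0_muley ?lte_fin ?(divr_gt0 b0 ps0) //.
rewrite -!EFinM.
have -> : (- +oo = -oo :> \bar R)%E by [].
by rewrite addeNy ltNy0.
Qed.
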